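(* Let $G$ be a non-complete double-critical $k$-chromatic graph. Then $G$ does not contain the complete graph $K_{k-1}$ as a subgraph.
   Context: All graphs are finite and simple. A graph $G$ is (vertex-)critical if $\chi(G-v)<\chi(G)$ for every vertex $v\in V(G)$. A critical graph $G$ is double-critical if $\chi(G-x-y)\le\chi(G)-2$ for every edge $xy\in E(G)$. *)

(* Defs.v *)
From Stdlib Require Import ClassicalEpsilon.
From mathcomp Require Import all_boot.
Set Implicit Arguments. Unset Strict Implicit. Unset Printing Implicit Defensive.

Definition simple_graph (T : finType) (e : rel T) : Prop :=
  symmetric e /\ irreflexive e.

Definition proper_colouring (T : finType) (e : rel T) (S : {set T}) (k : nat)
  (f : T -> nat) : Prop :=
  (forall x, x \in S -> f x < k) /\
  (forall x y, x \in S -> y \in S -> e x y -> f x != f y).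

Definition colourable (T : finType) (e : rel T) (S : {set T}) (k : nat) : Prop :=
  exists f : T -> nat, proper_colouring e S k f.

(* chromatic number of the subgraph of (T,e) induced by S: the least k
   such that S is k-colourable (well defined for irreflexive e, since #|T| colours always suffice;
   we decide colourability classically and take ex_minn). *)
Definition colourableb (T : finType) (e : rel T) (S : {set T}) (k : nat) : bool :=
  if excluded_middle_informative (colourable e S k) then true else false.

Definition chi (T : finType) (e : rel T) (S : {set T}) : nat :=
  if excluded_middle_informative (exists k, colourableb e S k) is left P
  then ex_minn P else 0.

Definition critical (T : finType) (e : rel T) : Prop :=
  forall v : T, chi e (setT :\ v) < chi e setT.

Definition double_critical (T : finType) (e : rel T) : Prop :=
  critical e /\
  forall x y : T, e x y -> chi e (setT :\ x :\ y) <= chi e setT - 2.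

Definition complete_graph (T : finType) (e : rel T) : Prop :=
  forall x y : T, x != y -> e x y.

Definition contains_clique (T : finType) (e : rel T) (n : nat) : Prop :=
  exists S : {set T}, #|S| = n /\
    (forall x y, x \in S -> y \in S -> x != y -> e x y).

(* Main.v *)
Require Import Defs.
From Stdlib Require Import ClassicalEpsilon.
From mathcomp Require Import all_boot.
From mathcomp Require Import zify.

Section Aux.
Variables (T : finType) (e : rel T).
Hypothesis irr : irreflexive e.

Lemma colourableP (S : {set T}) k : colourableb e S k <-> colourable e S k.
Proof. by rewrite /colourableb; case: excluded_middle_informative. Qed.

Lemma colourable_ex (S : {set T}) : exists k, colourableb e S k.
Proof.
exists #|T|; apply/colourableP; exists (fun x => nat_of_ord (enum_rank x)); split.
  by move=> x _; apply: ltn_ord.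
move=> x y _ _ exy; apply/negP => /eqP H.
have := congr1 enum_val (val_inj H); rewrite !enum_rankK => xy.
by move: exy; rewrite xy irr.
Qed.

Lemma chi_spec (S : {set T}) : colourable e S (chi e S) /\
  (forall m, colourable e S m -> chi e S <= m).
Proof.
rewrite /chi; case: excluded_middle_informative => [P|nP]; last first.
  by exfalso; apply: nP; apply: colourable_ex.
case: ex_minnP => m /colourableP Hm Hmin; split => // n /colourableP Hn.
exact: Hmin.
Qed.

Lemma clique_le (S C : {set T}) : C \subset S ->
  (forall x y, x \in C -> y \in C -> x != y -> e x y) -> #|C| <= chi e S.
Proof.
move=> sub cl; have [[f [Hlt Hne]] _] := chi_spec S.
rewrite cardE -(size_map f) -(size_iota 0 (chi e S)).
apply: uniq_leq_size.
  rewrite map_inj_in_uniq ?enum_uniq // => x y; rewrite !mem_enum => xC yC fxy.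
  apply/eqP; apply: contraT => nxy.
  have := Hne x y (subsetP sub x xC) (subsetP sub y yC) (cl x y xC yC nxy).
  by rewrite fxy eqxx.
move=> i /mapP [x]; rewrite mem_enum => xC ->; rewrite mem_iota add0n /=.
exact: Hlt (subsetP sub x xC).
Qed.

End Aux.

Theorem proposition2 (T : finType) (e : rel T) (k : nat) :
  simple_graph e ->
  double_critical e ->
  chi e setT = k ->
  ~ complete_graph e ->
  ~ contains_clique e k.-1.
Proof.
move=> [sym irr] [crit dc] chik ncomp [H [cardH clH]].
case: (leqP k 1) => hk.
  apply: ncomp => x y nxy; exfalso.
  have := crit x; rewrite chik.
  have := @clique_le T e irr (setT :\ x) [set y].
  rewrite cards1 => hcl hcrit.
  have sub : [set y] \subset setT :\ x.
    by apply/subsetP => z; rewrite in_set1 => /eqP ->; rewrite !inE eq_sym nxy.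
  have cl : forall x0 y0, x0 \in [set y] -> y0 \in [set y] -> x0 != y0 -> e x0 y0.
    by move=> x0 y0; rewrite !in_set1 => /eqP -> /eqP ->; rewrite eqxx.
  have h1 := hcl sub cl; lia.
have [v vH] : exists v, v \notin H.
  case: (pickP [pred v | v \notin H]) => [v vH|none]; first by exists v.
  exfalso; apply: ncomp => x y nxy; apply: clH => //;
  by apply: negbFE; apply: none.
have Hn : forall w, e v w -> w \in H.
  move=> w evw; apply/negPn/negP => wH.
  have := dc v w evw; rewrite chik.
  have := @clique_le T e irr (setT :\ v :\ w) H.
  rewrite cardH => hcl hdc.
  have sub : H \subset setT :\ v :\ w.
    apply/subsetP => z zH; rewrite !inE andbT.
    apply/andP; split; apply/negP => /eqP zE; [move: wH | move: vH];
    by rewrite -zE zH.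
  have h1 := hcl sub clH; lia.
case: (pickP [pred h | (h \in H) && ~~ e v h]) => [h /andP [hH nevh] | none].
  have [[f [Hlt Hne]] _] := @chi_spec T e irr (setT :\ v).
  have chv := crit v; rewrite chik in chv.
  have [_ Hmin] := @chi_spec T e irr (setT : {set T}).
  have hv : h != v by apply/negP => /eqP E; move: vH; rewrite -E hH.
  have : colourable e setT k.-1.
    exists (fun x => if x == v then f h else f x); split.
      move=> x _; case: eqP => [_|/eqP xv].
        have := Hlt h; rewrite !inE hv => /(_ isT); lia.
      have := Hlt x; rewrite !inE xv => /(_ isT); lia.
    move=> x y _ _ exy.
    case: (eqVneq x v) => [xv|xv]; case: (eqVneq y v) => [yv|yv].
    - by move: exy; rewrite xv yv irr.
    - subst x; have yH := Hn y exy.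
      have hy : h != y by apply/negP => /eqP E; move: nevh; rewrite E exy.
      apply: Hne; rewrite ?inE ?hv ?yv //; exact: clH.
    - subst y; rewrite sym in exy; have xH := Hn x exy.
      have hx : x != h by apply/negP => /eqP E; move: nevh; rewrite -E exy.
      apply: Hne; rewrite ?inE ?hv ?xv //; exact: clH.
    - by apply: Hne; rewrite ?inE ?xv ?yv.
  move=> /Hmin; rewrite chik; lia.
have clK : forall x y, x \in v |: H -> y \in v |: H -> x != y -> e x y.
  have ev : forall z, z \in H -> e v z.
    by move=> z zH; have := none z; rewrite /= zH /= => /negbFE.
  move=> x y /setU1P [->|xH] /setU1P [->|yH] nxy.
  - by rewrite eqxx in nxy.
  - exact: ev.
  - by rewrite sym; apply: ev.
  - exact: clH.
apply: ncomp => x y nxy.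
case: (pickP [pred u | u \notin v |: H]) => [u uK | allK].
  exfalso; have := crit u; rewrite chik.
  have := @clique_le T e irr (setT :\ u) (v |: H).
  rewrite cardsU1 vH cardH /= => hcl hcrit.
  have sub : v |: H \subset setT :\ u.
    apply/subsetP => z zK; rewrite !inE andbT; apply/negP => /eqP E.
    by move: uK; rewrite /= -E zK.
  have h1 := hcl sub clK; lia.
by apply: clK => //; apply: negbFE; apply: allK.
Qed.
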